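(* There exists a constant $c>0$ such that if $p=p(n)\le c/n^2$, then asymptotically almost surely the random triangular group $\Gamma(n,p)$ is a free group.
   Context: The random triangular group $\Gamma(n,p)$ is the group given by a presentation $\langle S\mid R\rangle$, where $S$ is a set of $n$ generators and $R$ is a random set of relations obtained by including independently, each with probability $p$, every cyclically reduced word of length three over the alphabet $S\cup S^{-1}$ (i.e. every word $abc$ with letters in $S\cup S^{-1}$ such that $a\neq b^{-1}$, $b\neq c^{-1}$, $c\neq a^{-1}$; distinct words are distinct candidates, in particular cyclic shifts of a word are distinct words). A property holds asymptotically almost surely (a.a.s.) if its probability tends to $1$ as $n\to\infty$. *)

(* Defs.v *)
From HB Require Import structures.
From mathcomp Require Import all_boot all_order all_algebra.
From mathcomp Require Import boolp classical_sets reals topology normedtype sequences.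
Set Implicit Arguments. Unset Strict Implicit. Unset Printing Implicit Defensive.
Import Order.TTheory GRing.Theory Num.Theory.

(* A letter over the alphabet T is (s, true) for the generator s and
   (s, false) for its inverse s^-1. *)
Definition letter (T : Type) := (T * bool)%type.

Definition linv {T : Type} (x : letter T) : letter T := (x.1, ~~ x.2).

Definition winv {T : Type} (w : seq (letter T)) : seq (letter T) :=
  rev (map linv w).

(* free reduction (stack algorithm): reduce w is the unique freely reduced
   word freely equivalent to w *)
Definition reduce_step {T : eqType} (x : letter T) (acc : seq (letter T)) :=
  match acc with
  | y :: acc' => if y == linv x then acc' else x :: acc
  | [::] => [:: x]
  end.

Definition reduce {T : eqType} (w : seq (letter T)) : seq (letter T) :=
  foldr reduce_step [::] w.

(* Membership of (the class of) a word u in the normal closure, inside the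
   free group F(T), of a set Rel of relator words: u is freely equal to a
   product of conjugates g r^{+-1} g^-1 with r in Rel. *)
Definition in_nclosure {T : eqType} (Rel : seq (letter T) -> Prop)
    (u : seq (letter T)) : Prop :=
  exists l : seq (seq (letter T) * seq (letter T) * bool),
    (forall t, t \in l -> Rel t.1.2) /\
    reduce u =
    reduce (flatten (map (fun t : seq (letter T) * seq (letter T) * bool =>
        t.1.1 ++ (if t.2 then t.1.2 else winv t.1.2) ++ winv t.1.1) l)).

Definition hom_word {T X : Type} (f : T -> seq (letter X))
    (u : seq (letter T)) : seq (letter X) :=
  flatten (map (fun x : letter T => if x.2 then f x.1 else winv (f x.1)) u).

(* The group <T | Rel> = F(T)/N(Rel) is free iff for some set X there is a
   homomorphism F(T) -> F(X) which is onto and whose kernel is exactly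
   N(Rel) (first isomorphism theorem). *)
Definition presents_free_group {T : eqType} (Rel : seq (letter T) -> Prop)
    : Prop :=
  exists (X : eqType) (f : T -> seq (letter X)),
    (forall w : seq (letter X), exists u : seq (letter T),
        reduce (hom_word f u) = reduce w) /\
    (forall u : seq (letter T),
        reduce (hom_word f u) = [::] <-> in_nclosure Rel u).

Definition lett (n : nat) : finType := ('I_n * bool)%type.
Definition triple (n : nat) : finType := (lett n * lett n * lett n)%type.

Definition tword {n : nat} (t : triple n) : seq (letter 'I_n) :=
  [:: t.1.1; t.1.2; t.2].

Definition cyc_red3 {n : nat} (t : triple n) : bool :=
  [&& t.1.1 != linv t.1.2, t.1.2 != linv t.2 & t.2 != linv t.1.1].

Definition candidates (n : nat) : {set triple n} := [set t | cyc_red3 t].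

Definition triangular_free {n : nat} (Rs : {set triple n}) : Prop :=
  presents_free_group (fun r : seq (letter 'I_n) =>
                         exists2 t, t \in Rs & r = tword t).

Local Open Scope ring_scope.

(* Probability that Gamma(n, p) is free: each candidate relator is included
   independently with probability p. *)
Definition prob_free (R : realType) (n : nat) (p : R) : R :=
  \sum_(Rs : {set triple n} | Rs \subset candidates n)
     (if `[< triangular_free Rs >] then
        p ^+ #|Rs| * (1 - p) ^+ (#|candidates n| - #|Rs|)%N
      else 0).

(* Main.v *)
Require Import Defs.
From HB Require Import structures.
From mathcomp Require Import all_boot all_order all_algebra.
From mathcomp Require Import zify ring lra.
From mathcomp Require Import reals.
Set Implicit Arguments. Unset Strict Implicit. Unset Printing Implicit Defensive.

Section FreeRed.
Variable T : eqType.
Implicit Types (x y : letter T) (u v w acc : seq (letter T)).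

Lemma linvK x : linv (linv x) = x.
Proof. by case: x => a b; rewrite /linv /= negbK. Qed.

Lemma linv_inj : injective (@linv T).
Proof. exact: (can_inj linvK). Qed.

Fixpoint isred w := match w with
  | x :: ((y :: _) as w') => (y != linv x) && isred w'
  | _ => true end.

Lemma isred_cons x w : isred (x :: w) -> isred w.
Proof. by case: w => //= y w /andP[]. Qed.

Lemma isred_step x acc : isred acc -> isred (reduce_step x acc).
Proof.
case: acc => //= y acc H; case: ifP => [_ |/negbT ne]; first exact: isred_cons H.
by apply/andP.
Qed.

Lemma isred_reduce w : isred (reduce w).
Proof. by elim: w => //= x w IH; apply: isred_step. Qed.

Lemma step_cancel x acc : isred acc ->
  reduce_step x (reduce_step (linv x) acc) = acc.
Proof.
case: acc => [|y acc] /=; first by rewrite eqxx.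
rewrite linvK; case: ifP => [/eqP -> | ne] /=; last by rewrite eqxx.
case: acc => [|z acc] //= /andP[nz _].
by rewrite (negbTE nz).
Qed.

Definition act u acc := foldr reduce_step acc u.

Lemma reduce_cat u v : reduce (u ++ v) = act u (reduce v).
Proof. by rewrite /reduce /act foldr_cat. Qed.

Lemma isred_act u acc : isred acc -> isred (act u acc).
Proof. by elim: u => //= x u IH /IH; apply: isred_step. Qed.

Lemma reduce_id w : isred w -> reduce w = w.
Proof.
elim: w => //= x w IH Hw; rewrite IH ?(isred_cons Hw) //.
by case: w Hw {IH} => //= y w /andP[/negbTE -> _].
Qed.

Lemma act_step x r acc : isred acc -> isred r ->
  act (reduce_step x r) acc = reduce_step x (act r acc).
Proof.
move=> Hacc; case: r => [|y r] //= Hr; case: ifP => //= /eqP ->.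
by rewrite step_cancel // isred_act.
Qed.

Lemma act_reduce u acc : isred acc -> act (reduce u) acc = act u acc.
Proof.
move=> Hacc; elim: u => //= x u IH.
by rewrite act_step ?isred_reduce // IH.
Qed.

Lemma reduce_catl u v : reduce (reduce u ++ v) = reduce (u ++ v).
Proof. by rewrite !reduce_cat act_reduce // isred_reduce. Qed.

Lemma reduce_catr u v : reduce (u ++ reduce v) = reduce (u ++ v).
Proof. by rewrite !reduce_cat reduce_id // isred_reduce. Qed.

Definition feq u v := reduce u = reduce v.

Lemma feq_cat u u' v v' : feq u u' -> feq v v' -> feq (u ++ v) (u' ++ v').
Proof.
rewrite /feq => Hu Hv.
by rewrite -reduce_catr Hv reduce_catr -reduce_catl Hu reduce_catl.
Qed.

Lemma feq_refl u : feq u u. Proof. by []. Qed.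
Lemma feq_sym u v : feq u v -> feq v u. Proof. by []. Qed.
Lemma feq_trans u v w : feq u v -> feq v w -> feq u w.
Proof. by rewrite /feq => ->. Qed.

Lemma winv_cons x u : winv (x :: u) = winv u ++ [:: linv x].
Proof. by rewrite /winv /= rev_cons cats1. Qed.

Lemma winv_cat u v : winv (u ++ v) = winv v ++ winv u.
Proof. by rewrite /winv map_cat rev_cat. Qed.

Lemma winvK u : winv (winv u) = u.
Proof. by rewrite /winv map_rev revK -map_comp (eq_map linvK) map_id. Qed.

Lemma winv_nil : winv [::] = [::] :> seq (letter T). Proof. by []. Qed.

Lemma act_cancel u acc : isred acc -> act (u ++ winv u) acc = acc.
Proof.
elim: u acc => //= x u IH acc Hacc.
rewrite winv_cons catA /act foldr_cat /= -/(act _ _) IH ?step_cancel //.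
exact: isred_step.
Qed.

Lemma feq_cancel u : feq (u ++ winv u) [::].
Proof. by rewrite /feq /reduce -/(act _ _) act_cancel. Qed.

Lemma feq_cancel' u : feq (winv u ++ u) [::].
Proof. by rewrite -{2}(winvK u); apply: feq_cancel. Qed.

Lemma feq_mid u z v : feq z [::] -> feq (u ++ z ++ v) (u ++ v).
Proof.
move=> Hz; apply: feq_cat => //.
by rewrite -[v in X in feq _ X]cat0s; apply: feq_cat.
Qed.

Lemma feq_winv u v : feq u v -> feq (winv u) (winv v).
Proof.
move=> H.
apply: (@feq_trans _ (winv u ++ (v ++ winv v))).
  by rewrite -[winv u in X in feq X _]cats0; apply: feq_cat => //; apply: feq_sym; apply: feq_cancel.
rewrite catA; apply: (@feq_trans _ ((winv u ++ u) ++ winv v)).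
  by apply: feq_cat => //; apply: feq_cat.
by rewrite -[winv v in X in feq _ X]cat0s; apply: feq_cat => //; apply: feq_cancel'.
Qed.

End FreeRed.

Section Hom.
Variables T X : eqType.
Variable f : T -> seq (letter X).
Implicit Types (x y : letter T) (u v w : seq (letter T)).

Definition hterm x : seq (letter X) := if x.2 then f x.1 else winv (f x.1).

Lemma hom_cons x u : hom_word f (x :: u) = hterm x ++ hom_word f u.
Proof. by []. Qed.

Lemma hom_nil : hom_word f [::] = [::]. Proof. by []. Qed.

Lemma hom_cat u v : hom_word f (u ++ v) = hom_word f u ++ hom_word f v.
Proof. by rewrite /hom_word map_cat flatten_cat. Qed.

Lemma hom1 x : hom_word f [:: x] = hterm x.
Proof. by rewrite hom_cons hom_nil cats0. Qed.

Lemma hterm_linv x : hterm (linv x) = winv (hterm x).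
Proof. by case: x => s [] //=; rewrite /hterm /= winvK. Qed.

Lemma hom_winv u : hom_word f (winv u) = winv (hom_word f u).
Proof.
elim: u => //= x u IH.
by rewrite winv_cons hom_cat IH hom1 hterm_linv hom_cons winv_cat.
Qed.

Lemma hom_step x r : feq (hterm x ++ hom_word f r) (hom_word f (reduce_step x r)).
Proof.
case: r => [|y r]; first by rewrite hom_nil cats0 /reduce_step hom1.
rewrite [reduce_step _ _]/=; case: ifP => [/eqP -> | _]; last by [].
rewrite hom_cons hterm_linv catA -[hom_word f r in X in feq _ X]cat0s.
by apply: feq_cat => //; apply: feq_cancel.
Qed.

Lemma hom_reduce u : feq (hom_word f u) (hom_word f (reduce u)).
Proof.
elim: u => //= x u IH.
rewrite hom_cons; apply: (@feq_trans _ _ (hterm x ++ hom_word f (reduce u))).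
  exact: feq_cat.
exact: hom_step.
Qed.

Lemma hom_feq u v : feq u v -> feq (hom_word f u) (hom_word f v).
Proof.
move=> H; apply: (feq_trans (hom_reduce u)); rewrite H.
exact/feq_sym/hom_reduce.
Qed.

Lemma mem_winv (z : letter X) s : (z \in winv s) = (linv z \in s).
Proof.
by rewrite /winv mem_rev -{1}(linvK z) (mem_map (@linv_inj X)).
Qed.

Lemma hom_mem z w : z \in hom_word f w ->
  exists2 y, y \in w & (z \in f y.1) \/ (linv z \in f y.1).
Proof.
elim: w => //= y w IH; rewrite hom_cons mem_cat => /orP[|/IH[y' Hy' H]].
  rewrite /hterm; case: ifP => _ H; exists y; rewrite ?mem_head //; first by left.
  by right; rewrite -mem_winv.
by exists y' => //; rewrite inE Hy' orbT.
Qed.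

Lemma hom_eq_in (g : T -> seq (letter X)) w :
  (forall y, y \in w -> f y.1 = g y.1) -> hom_word f w = hom_word g w.
Proof.
elim: w => //= y w IH H.
rewrite !hom_cons IH; last by move=> z Hz; apply: H; rewrite inE Hz orbT.
by rewrite /hterm (H y (mem_head _ _)).
Qed.

End Hom.

Section NClosure.
Variable T : eqType.
Implicit Types (x y : letter T) (u v w : seq (letter T)).
Variable Rel : seq (letter T) -> Prop.

Definition nterm (t : seq (letter T) * seq (letter T) * bool) :=
  t.1.1 ++ (if t.2 then t.1.2 else winv t.1.2) ++ winv t.1.1.
Definition nprod l := flatten (map nterm l).

Local Notation N := (in_nclosure Rel).

Lemma NP u : N u <-> exists l, (forall t, t \in l -> Rel t.1.2) /\ feq u (nprod l).
Proof. by []. Qed.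

Lemma N_feq u v : feq u v -> N u -> N v.
Proof. by move=> H [l [Hl E]]; exists l; split => //; rewrite -E. Qed.

Lemma N_nil : N [::].
Proof. by exists [::]. Qed.

Lemma N_rel r : Rel r -> N r.
Proof.
move=> Hr; exists [:: ([::], r, true)]; split.
  by move=> t; rewrite inE => /eqP ->.
by rewrite /nprod /= /nterm /= !cats0.
Qed.

Lemma N_cat u v : N u -> N v -> N (u ++ v).
Proof.
move=> [l1 [H1 E1]] [l2 [H2 E2]]; exists (l1 ++ l2); split.
  by move=> t; rewrite mem_cat => /orP[/H1|/H2].
by rewrite /nprod map_cat flatten_cat; apply: feq_cat.
Qed.

Lemma nprod_conj w l :
  feq (nprod (map (fun t => (w ++ t.1.1, t.1.2, t.2)) l)) (w ++ nprod l ++ winv w).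
Proof.
elim: l => [|t l IH]; first by apply/feq_sym; rewrite /nprod /=; apply: feq_cancel.
rewrite /nprod /= -/(nprod _) -/(nprod _).
apply: (@feq_trans _ _ (nterm (w ++ t.1.1, t.1.2, t.2) ++ (w ++ nprod l ++ winv w))).
  exact: feq_cat.
rewrite /nterm /= winv_cat -!catA.
apply: feq_cat => //; rewrite !catA; apply: feq_cat => //.
rewrite -!catA; apply: feq_cat => //; apply: feq_cat => //; apply: feq_cat => //.
by rewrite -[nprod l in X in feq _ X]cat0s catA; apply: feq_cat => //; apply: feq_cancel'.
Qed.

Lemma N_conj w u : N u -> N (w ++ u ++ winv w).
Proof.
move=> [l [Hl E]]; exists (map (fun t => (w ++ t.1.1, t.1.2, t.2)) l); split.
  move=> t /mapP[t' Ht' ->] /=; exact: Hl.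
apply: feq_sym; apply: (feq_trans (nprod_conj w l)).
apply: feq_cat => //; apply: feq_cat => //; exact: esym E.
Qed.

Lemma nprod_inv l :
  nprod (rev (map (fun t => (t.1, ~~ t.2)) l)) = winv (nprod l).
Proof.
elim: l => //= t l IH.
rewrite rev_cons /nprod map_rcons flatten_rcons -/(nprod _) IH /= winv_cat.
congr (_ ++ _); rewrite /nterm /= !winv_cat winvK.
by case: (t.2) => /=; rewrite ?winvK ?catA.
Qed.

Lemma N_inv u : N u -> N (winv u).
Proof.
move=> [l [Hl E]]; exists (rev (map (fun t => (t.1, ~~ t.2)) l)); split.
  move=> t; rewrite mem_rev => /mapP[t' Ht' ->] /=; exact: Hl.
change (feq (winv u) (nprod (rev (map (fun t => (t.1, ~~ t.2)) l)))).
by rewrite nprod_inv; apply: feq_winv.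
Qed.

Lemma N_mono (Rel' : seq (letter T) -> Prop) u :
  (forall r, Rel r -> Rel' r) -> N u -> in_nclosure Rel' u.
Proof. by move=> H [l [Hl E]]; exists l; split => // t /Hl /H. Qed.

Definition cong u v := N (u ++ winv v).

Lemma cong_refl u : cong u u.
Proof. by apply: (N_feq _ N_nil); apply/feq_sym/feq_cancel. Qed.

Lemma cong_trans u v w : cong u v -> cong v w -> cong u w.
Proof.
move=> H1 H2; have := N_cat H1 H2; apply: N_feq.
rewrite -catA [winv v ++ _]catA; apply: feq_mid; exact: feq_cancel'.
Qed.

Lemma cong_sym u v : cong u v -> cong v u.
Proof. by move/N_inv; rewrite /cong winv_cat winvK. Qed.

Lemma cong_cat u u' v v' : cong u u' -> cong v v' -> cong (u ++ v) (u' ++ v').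
Proof.
move=> H1 H2; have := N_cat (N_conj u H2) H1; apply: N_feq.
rewrite /cong winv_cat -!catA; do 3! apply: feq_cat => //.
rewrite catA -[winv u' in X in feq _ X]cat0s; apply: feq_cat => //; exact: feq_cancel'.
Qed.

Lemma cong_winv u v : cong u v -> cong (winv u) (winv v).
Proof.
move=> /N_inv H; have := N_conj (winv u) H; apply: N_feq.
rewrite /cong !winv_cat !winvK -!catA; apply: feq_cat => //.
rewrite -[v in X in feq _ X]cats0; apply: feq_cat => //; exact: feq_cancel'.
Qed.

Lemma cong_feql u u' v : feq u u' -> cong u v -> cong u' v.
Proof. by move=> H; apply: N_feq; apply: feq_cat. Qed.

Lemma cong_feqr u v v' : feq v v' -> cong u v -> cong u v'.
Proof. by move=> H; apply: N_feq; apply: feq_cat => //; apply: feq_winv. Qed.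

Lemma cong_N u : N u -> cong u [::].
Proof. by rewrite /cong cats0. Qed.

Lemma N_cong u : cong u [::] -> N u.
Proof. by rewrite /cong cats0. Qed.

End NClosure.

Section Peel.
Variable T : eqType.
Implicit Types (x y z : letter T) (u v w a b : seq (letter T)).

Definition occ (s : T) w := count (fun x : letter T => x.1 == s) w.

Fixpoint peel (L : seq (T * seq (letter T))) : bool :=
  match L with
  | [::] => true
  | q :: L' => [&& occ q.1 q.2 == 1, all (fun q' => occ q.1 q'.2 == 0) L' & peel L']
  end.

Definition RelL (L : seq (T * seq (letter T))) (r : seq (letter T)) : Prop :=
  r \in map snd L.

Lemma occ_cat s u v : occ s (u ++ v) = occ s u + occ s v.
Proof. exact: count_cat. Qed.

Lemma split_occ1 s w : occ s w = 1 ->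
  exists a x b, [/\ w = a ++ x :: b, x.1 = s, occ s a = 0 & occ s b = 0].
Proof.
elim: w => //= y w IH; case: eqP => [Ey | ney] /=.
  by move=> [H]; exists [::], y, w.
rewrite add0n => /IH[a [x [b [-> Hx Ha Hb]]]].
by exists (y :: a), x, b; split => //=; rewrite Ha; case: eqP.
Qed.

Lemma occ0P s w y : occ s w = 0 -> y \in w -> y.1 != s.
Proof.
move=> /eqP; rewrite /occ eqn0Ngt -has_count => /hasPn H /H //.
Qed.

Lemma occ_winv s w : occ s (winv w) = occ s w.
Proof. by rewrite /occ /winv count_rev count_map. Qed.

Lemma occ_gt0 s w y : y \in w -> y.1 = s -> 0 < occ s w.
Proof. by move=> Hy Hs; rewrite /occ -has_count; apply/hasP; exists y => //; rewrite Hs. Qed.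

Lemma cong_hom (Rel : seq (letter T) -> Prop) g :
  (forall s, cong Rel [:: (s, true)] (g s)) ->
  forall u, cong Rel u (hom_word g u).
Proof.
move=> Hg; elim => [|x u IH]; first exact: cong_refl.
rewrite hom_cons -cat1s; apply: cong_cat => //.
case: x => s [] /=; rewrite /hterm /=; first exact: Hg.
by have := cong_winv (Hg s).
Qed.

Lemma hom_N (Rel : seq (letter T) -> Prop) (X : eqType) (g : T -> seq (letter X)) u :
  (forall r, Rel r -> reduce (hom_word g r) = [::]) ->
  in_nclosure Rel u -> reduce (hom_word g u) = [::].
Proof.
move=> Hr [l [Hl E]].
have := hom_feq g E; rewrite /feq => ->.
elim: l Hl {E} => //= t l IH Hl.
rewrite hom_cat -/(reduce _) -reduce_catr IH; last by move=> t' Ht'; apply: Hl; rewrite inE Ht' orbT.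
rewrite cats0 !hom_cat hom_winv.
have Ht : reduce (hom_word g (if t.2 then t.1.2 else winv t.1.2)) = [::].
  have := Hr _ (Hl t (mem_head _ _)); case: (t.2) => // H.
  rewrite hom_winv; have := @feq_winv _ _ [::] H; rewrite /feq => ->; by [].
change (feq (hom_word g t.1.1 ++ hom_word g (if t.2 then t.1.2 else winv t.1.2) ++
   winv (hom_word g t.1.1)) [::]).
apply: (@feq_trans _ _ (hom_word g t.1.1 ++ [::] ++ winv (hom_word g t.1.1))).
  by apply: feq_cat => //; apply: feq_cat.
exact: feq_cancel.
Qed.

Definition pivot (L : seq (T * seq (letter T))) (s : T) := has (fun q => q.1 == s) L.

Lemma peel_sub L : peel L -> exists g : T -> seq (letter T),
  [/\ (forall s, ~~ pivot L s -> g s = [:: (s, true)]),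
      (forall s y, y \in g s -> ~~ pivot L y.1),
      (forall s y, y \in g s -> y.1 = s \/ has (fun q => 0 < occ y.1 q.2) L),
      (forall s, cong (RelL L) [:: (s, true)] (g s)) &
      (forall q, q \in L -> reduce (hom_word g q.2) = [::])].
Proof.
elim: L => [_ | [s1 r1] L IH /= /and3P[/eqP H1 /allP H0 /IH[g' [P1 P2 P3 P4 P5]]]].
  exists (fun s => [:: (s, true)]); split => //.
  - by move=> s y; rewrite inE => /eqP -> /=; left.
  - by move=> s; exact: cong_refl.
have {}H0 q : q \in L -> occ s1 q.2 = 0 by move=> /H0 /eqP.
have [a [x [b [Er1 Hx Ha Hb]]]] := split_occ1 H1.
pose sol := if x.2 then winv a ++ winv b else b ++ a.
pose g s := if s == s1 then hom_word g' sol else g' s.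
have K s y : s != s1 -> y \in g' s -> y.1 != s1.
  move=> ns /P3[-> //|/hasP[q Hq]]; apply: contraTneq => ->.
  by rewrite -leqNgt (H0 q Hq).
have Hsol z : z \in sol -> z.1 != s1 /\ 0 < occ z.1 r1.
  have Hab z' : z' \in a ++ b -> z'.1 != s1 /\ 0 < occ z'.1 r1.
    move=> Hz'; split.
      by move: Hz'; rewrite mem_cat => /orP[/(occ0P Ha) | /(occ0P Hb)].
    apply: (@occ_gt0 _ _ z') => //; rewrite Er1 mem_cat inE.
    by move: Hz'; rewrite mem_cat => /orP[->|->]; rewrite ?orbT.
  rewrite /sol; case: (x.2).
    rewrite mem_cat !mem_winv => /orP[H|H];
      (have [] := Hab (linv z); first by rewrite mem_cat H ?orbT); by [].
  by move=> Hz; apply: Hab; move: Hz; rewrite !mem_cat orbC.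
have Kh y : y \in hom_word g' sol -> y.1 != s1 /\ ~~ pivot L y.1 /\
                 (0 < occ y.1 r1 \/ has (fun q => 0 < occ y.1 q.2) L).
  move=> /hom_mem[z /Hsol[zs zocc] Hy].
  have Hy' : exists2 y', y' \in g' z.1 & y'.1 = y.1.
    by case: Hy => Hy; [exists y | exists (linv y)].
  case: Hy' => y' Hy' <-; split; first exact: K Hy'.
  split; first exact: P2 Hy'.
  by case: (P3 _ _ Hy') => [->|]; [left|right].
have gE s : s != s1 -> g s = g' s by rewrite /g => /negbTE ->.
have gs1 : g s1 = hom_word g' sol by rewrite /g eqxx.
have Hag w : (forall y, y \in w -> y.1 != s1) -> hom_word g w = hom_word g' w.
  by move=> Hw; apply: hom_eq_in => y /Hw /gE.
have RL r : RelL L r -> RelL ((s1, r1) :: L) r by rewrite /RelL /= inE => ->; rewrite orbT.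
exists g; split.
- move=> s; rewrite /pivot /= negb_or => /andP[ns np].
  by rewrite gE 1?eq_sym // P1.
- move=> s y; rewrite /pivot /= negb_or; case: (eqVneq s s1) => [-> | ns].
    by rewrite gs1 => /Kh[ns1 [np _]]; rewrite eq_sym ns1.
  by rewrite gE // => Hy; rewrite eq_sym (K _ _ ns Hy) (P2 _ _ Hy).
- move=> s y; case: (eqVneq s s1) => [-> | ns].
    rewrite gs1 => /Kh[_ [_ [H|H]]]; right; rewrite /= H ?orbT //.
  by rewrite gE // => /P3[->|H]; [left | right] => //=; rewrite ?H ?orbT.
- move=> s; case: (eqVneq s s1) => [-> | ns]; last first.
    by rewrite gE //; apply: N_mono (P4 s).
  rewrite gs1; apply: (@cong_trans _ _ _ sol).
    have Hr1 : RelL ((s1, r1) :: L) r1 by rewrite /RelL inE eqxx.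
    have Ex : x = (s1, x.2) by rewrite -Hx; exact: surjective_pairing.
    rewrite /sol; move: Er1; rewrite Ex /=; case: (x.2) => Er1.
      have := N_conj (winv a) (N_rel Hr1); apply: N_feq.
      rewrite /cong Er1 winv_cat !winvK !catA -[X in feq _ X]cat0s -!catA.
      by rewrite catA; apply: feq_cat => //; apply: feq_cancel'.
    have := N_conj b (N_inv (N_rel Hr1)); apply: N_feq.
    rewrite /cong Er1 !winv_cat winv_cons -!catA catA -[X in feq _ X]cat0s.
    by apply: feq_cat; [exact: feq_cancel | ].
  by apply: cong_hom => s0; apply: N_mono (P4 s0).
- move=> q; rewrite inE => /orP[/eqP -> /= | Hq]; last first.
    rewrite Hag ?P5 // => y Hy; exact: (occ0P (H0 q Hq)).
  rewrite Er1 hom_cat hom_cons Hag; last by move=> y; apply: occ0P.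
  rewrite (Hag b); last by move=> y; apply: occ0P.
  have -> : hterm g x = winv (hom_word g' a) ++ winv (hom_word g' b).
    rewrite /hterm Hx gs1 /sol; case: (x.2).
      by rewrite hom_cat !hom_winv.
    by rewrite hom_cat winv_cat.
  change (feq (hom_word g' a ++ ((winv (hom_word g' a) ++ winv (hom_word g' b)) ++ hom_word g' b)) [::]).
  rewrite -catA; apply: (@feq_trans _ _ (hom_word g' a ++ winv (hom_word g' a) ++ [::])).
    by apply: feq_cat => //; apply: feq_cat => //; exact: feq_cancel'.
  rewrite cats0; exact: feq_cancel.
Qed.
End Peel.

Section Free.
Variable T : eqType.
Variable L : seq (T * seq (letter T)).
Hypothesis HL : peel L.

Definition XT := {s : T | ~~ pivot L s}.

Lemma reduce_map (Y Z : eqType) (h : letter Y -> letter Z) (w : seq (letter Y)) :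
  injective h -> (forall y, h (linv y) = linv (h y)) ->
  reduce (map h w) = map h (reduce w).
Proof.
move=> hi hl; elim: w => //= x w IH; rewrite IH.
case: (reduce w) => //= y r; rewrite -hl (inj_eq hi).
by case: ifP.
Qed.

Lemma peel_free : presents_free_group (RelL L).
Proof.
have [g [P1 P2 P3 P4 P5]] := peel_sub HL.
pose proj (x : letter T) : option (letter XT) :=
  if insub x.1 is Some y then Some (y, x.2) else None.
pose f (s : T) := pmap proj (g s).
pose h (y : letter XT) : letter T := (val y.1, y.2).
have hi : injective h.
  by move=> [a b] [c d] [/val_inj -> ->].
have hl y : h (linv y) = linv (h y) by [].
have mapf w : (forall y, y \in w -> ~~ pivot L y.1) -> map h (pmap proj w) = w.
  elim: w => //= y w IH Hw; rewrite /proj.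
  have Hy := Hw y (mem_head _ _).
  rewrite insubT /= IH //; last by move=> z Hz; apply: Hw; rewrite inE Hz orbT.
  by case: y Hy {Hw}.
have fg s : map h (f s) = g s by apply: mapf => y; apply: P2.
have homfg u : hom_word g u = map h (hom_word f u).
  elim: u => //= x u IH; rewrite !hom_cons IH map_cat; congr (_ ++ _).
  rewrite /hterm; case: (x.2); first by rewrite fg.
  by rewrite /winv map_rev -map_comp -fg -map_comp.
have redfg u : reduce (hom_word g u) = map h (reduce (hom_word f u)).
  by rewrite homfg reduce_map.
exists XT, f; split.
- move=> w; exists (map h w); congr reduce.
  elim: w => //= y w IH; rewrite hom_cons IH (_ : y :: w = [:: y] ++ w) //; congr (_ ++ _).
  have Hy : ~~ pivot L (val y.1) by case: y => [[a pa] b].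
  rewrite /hterm /f /= P1 // /= /proj insubT /=.
  have -> : Sub (sval y.1) Hy = y.1 by apply: val_inj.
  by case: y {Hy} => a [].
- move=> u; split.
  + move=> H; have H' : reduce (hom_word g u) = [::] by rewrite redfg H.
    have := cong_hom P4 u; rewrite /cong; apply: N_feq.
    rewrite -[u in X in feq _ X]cats0; apply: feq_cat => //.
    exact: (@feq_winv _ _ [::]).
  + move=> /(hom_N (g := g)) H.
    have : reduce (hom_word g u) = [::].
      by apply: H => r /mapP[q Hq ->]; apply: P5.
    by rewrite redfg; case: (reduce _).
Qed.
End Free.

Section Tri.
Variable n : nat.
Implicit Types (t : triple n) (Rs S : {set triple n}) (s : 'I_n).

Definition occT s t := occ s (tword t).
Definition tot S s := \sum_(t in S) occT s t.
Definition bad S := (S != set0) && [forall s, tot S s != 1].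
Definition good Rs := [forall S : {set triple n}, (S \subset Rs) ==> ~~ bad S].

Definition liftL (L : seq ('I_n * triple n)) := map (fun q => (q.1, tword q.2)) L.

Lemma good_peel Rs : good Rs -> exists L : seq ('I_n * triple n),
  peel (liftL L) /\ (forall t, t \in Rs <-> exists2 q, q \in L & q.2 = t).
Proof.
move: {2}#|Rs| (leqnn #|Rs|) => k; elim: k Rs => [|k IH] Rs Hk Hg.
  exists [::]; split => // t; split => // Ht.
  by move: Hk; rewrite leqn0 cards_eq0 => /eqP E; rewrite E inE in Ht.
  by case: Ht.
have [E0 | Ne] := eqVneq Rs set0.
  exists [::]; split => // t; split; last by case.
  by rewrite E0 inE.
have : ~~ bad Rs by move/forallP: Hg => /(_ Rs); rewrite subxx.
rewrite /bad Ne /= negb_forall => /existsP[s]; rewrite negbK /tot => /sum_nat_eq1[t [Ht Ht1 Ho]].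
pose Rs' := Rs :\ t.
have Hk' : #|Rs'| <= k by move: Hk; rewrite (cardsD1 t) Ht.
have Hg' : good Rs'.
  apply/forallP => S; apply/implyP => HS; move/forallP: Hg => /(_ S); rewrite (subset_trans HS) //.
  exact: subD1set.
have [L [HL HLm]] := IH Rs' Hk' Hg'.
exists ((s, t) :: L); split.
  rewrite /= HL andbT; apply/andP; split; first by apply/eqP; exact: Ht1.
  apply/allP => q /mapP[q' Hq' ->] /=.
  have : q'.2 \in Rs' by apply/HLm; exists q'.
  rewrite !inE => /andP[ne Hin]; apply/eqP; exact: Ho ne Hin.
move=> t'; split.
  case: (eqVneq t' t) => [-> _ | ne Ht']; first by exists (s, t); rewrite ?mem_head.
  have : t' \in Rs' by rewrite !inE ne.
  by move/HLm => [q Hq E]; exists q => //; rewrite inE Hq orbT.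
move=> [q]; rewrite inE => /orP[/eqP -> <- // | Hq E].
have : t' \in Rs' by apply/HLm; exists q.
by rewrite inE => /andP[].
Qed.

Lemma presents_ext (T : eqType) (R1 R2 : seq (letter T) -> Prop) :
  (forall r, R1 r <-> R2 r) -> presents_free_group R1 -> presents_free_group R2.
Proof.
move=> H [X [f [Hs Hk]]]; exists X, f; split => // u; rewrite Hk.
by split; apply: N_mono => r /H.
Qed.

Lemma good_free Rs : good Rs -> triangular_free Rs.
Proof.
move=> /good_peel[L [HL HLm]].
apply: presents_ext (peel_free HL) => r.
rewrite /RelL /liftL -map_comp; split.
  by move=> /mapP[q Hq ->]; exists q.2 => //; apply/HLm; exists q.
by move=> [t /HLm[q Hq <-] ->]; apply/mapP; exists q.
Qed.

End Tri.

Section Comb.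
Variable n : nat.
Implicit Types (t : triple n) (Rs S : {set triple n}) (s : 'I_n) (V : {set 'I_n}).

Definition gens_in V t := [&& t.1.1.1 \in V, t.1.2.1 \in V & t.2.1 \in V].
Definition W V := [set t in candidates n | gens_in V t].
Definition kk (v : nat) := ((2 * v + 2) %/ 3)%N.

Lemma sum_eq1 (x : 'I_n) : (\sum_(s : 'I_n) (x == s : nat) = 1)%N.
Proof.
rewrite (bigD1 x) //= eqxx big1 // => s ne; by rewrite eq_sym (negbTE ne).
Qed.

Lemma sum_occT t : (\sum_s occT s t = 3)%N.
Proof.
rewrite /occT /occ /= (eq_bigr (fun s => (t.1.1.1 == s) + (t.1.2.1 == s) + (t.2.1 == s))%N).
  by rewrite !big_split /= !sum_eq1.
by move=> s _; rewrite addn0 addnA.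
Qed.

Lemma occT_gt0 s t : (0 < occT s t)%N = [|| t.1.1.1 == s, t.1.2.1 == s | t.2.1 == s].
Proof. by rewrite /occT /occ /=; case: (t.1.1.1 == s); case: (t.1.2.1 == s); case: (t.2.1 == s). Qed.

Lemma tot_ge s S t : t \in S -> (occT s t <= tot S s)%N.
Proof. by move=> Ht; rewrite /tot (bigD1 t) //= leq_addr. Qed.

Lemma bad_witness Rs : Rs \subset candidates n -> ~~ good Rs ->
  exists V, exists2 T : {set triple n}, V != set0 &
    [/\ T \subset W V, #|T| = kk #|V| & T \subset Rs].
Proof.
move=> RC; rewrite /good negb_forall => /existsP[S]; rewrite negb_imply negbK.
case/andP=> SR /andP[S0 /forallP Hs].
pose V := [set s | (0 < tot S s)%N].
have inV s t : t \in S -> (0 < occT s t)%N -> s \in V.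
  by move=> Ht H; rewrite inE (leq_trans H) // tot_ge.
have SW : S \subset W V.
  apply/subsetP => t Ht; rewrite inE (subsetP RC) ?(subsetP SR) //=.
  by rewrite /gens_in !(inV _ t Ht) // occT_gt0 eqxx ?orbT.
have V0 : V != set0.
  case/set0Pn: S0 => t Ht; apply/set0Pn; exists t.1.1.1.
  by apply: (inV _ t Ht); rewrite occT_gt0 eqxx.
have H3 : (2 * #|V| <= 3 * #|S|)%N.
  have -> : (3 * #|S| = \sum_(t in S) \sum_s occT s t)%N.
    rewrite (eq_bigr (fun _ => 3%N)); last by move=> t _; rewrite sum_occT.
    by rewrite sum_nat_const mulnC.
  rewrite exchange_big /= (bigID (fun s => s \in V)) /= -/(tot _ _).
  apply: leq_trans (leq_addr _ _).
  rewrite mulnC -sum_nat_const; apply: leq_sum => s HsV.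
  have := HsV; rewrite inE => H1; have := Hs s.
  move: H1; rewrite /tot; case: (\sum_(t in S) occT s t) => // [[]] //.
have kS : (kk #|V| <= #|S|)%N by rewrite /kk; lia.
have : (0 < #|[set T : {set triple n} | T \subset S & #|T| == kk #|V|]|)%N.
  by rewrite cards_draws bin_gt0.
case/card_gt0P => T; rewrite inE => /andP[TS /eqP TK].
exists V, T => //; split => //.
  exact: subset_trans TS SW.
exact: subset_trans TS SR.
Qed.
End Comb.

Lemma card_W n (V : {set 'I_n}) : (#|W V| <= 8 * #|V| ^ 3)%N.
Proof.
pose L : {set lett n} := setX V [set: bool].
have -> : (8 * #|V| ^ 3 = #|setX (setX L L) L|)%N.
  rewrite !cardsX cardsT card_bool !expnS expn0. move: #|V| => x; nia.
apply: subset_leq_card; apply/subsetP => [[[a b] c]].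
by rewrite !inE /gens_in /= => /andP[_ /and3P[-> -> ->]].
Qed.

Lemma expn_mono a b e : (a <= b -> a ^ e <= b ^ e)%N.
Proof. by case: e => // e H; rewrite leq_exp2r. Qed.

Lemma ffact_le_exp m k : (m ^_ k <= m ^ k)%N.
Proof.
elim: k m => [|k IH] m; first by [].
rewrite ffactnS expnS leq_mul2l; apply/orP; right.
by apply: leq_trans (IH _) _; apply: expn_mono; apply: leq_pred.
Qed.

Lemma bin_fact_le m k : ('C(m, k) * k`! <= m ^ k)%N.
Proof. by rewrite bin_ffact ffact_le_exp. Qed.

From mathcomp Require Import sequences exp.
Section PowFact.
Import Order.TTheory GRing.Theory Num.Theory.
Local Open Scope ring_scope.
Lemma pow_fact (R : realType) m : (m ^ m <= 4 ^ m * m`!)%N.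
Proof.
case: m => [//|j].
have e12 : expR (2^-1 : R) <= 2.
  have h : 1 - 2^-1 <= expR (- 2^-1 : R) by apply: expR_ge1Dx.
  rewrite expRN in h.
  move: h; have -> : (1 - 2^-1 : R) = 2^-1 by field.
  by rewrite lef_pV2 ?posrE ?expR_gt0 // ltr0n.
have e1 : expR (1 : R) <= 4.
  have -> : (1 : R) = 2^-1 + 2^-1 by field.
  rewrite expRD; apply: le_trans (ler_pM _ _ e12 e12) _; try exact/ltW/expR_gt0.
  lra.
have H := expR_ge1Dxn j (ler0n R j.+1).
rewrite -[j.+1%:R]mulr1 expRM_natl in H.
have H2 : (j.+1%:R * 1) ^+ j.+1 / j.+1`!%:R <= 4 ^+ j.+1 :> R.
  apply: le_trans (le_trans (ler_wpDl ler01 (lexx _)) H) _.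
  by apply: lerXn2r => //; rewrite nnegrE; [exact/ltW/expR_gt0 | lra].
rewrite mulr1 ler_pdivrMr ?ltr0n ?fact_gt0 // in H2.
by rewrite -(ler_nat R) natrM !natrX.
Qed.
End PowFact.

Lemma core_ineq (R : realType) n v : (1 <= v <= n)%N ->
  ('C(n, v) * 'C(8 * v ^ 3, kk v) * n * 2 ^ v <= v * n ^ (2 * kk v) * 4096 ^ kk v)%N.
Proof.
case/andP=> v1 vn; set k := kk v.
have k2 : (v.+1 <= 2 * k)%N by rewrite /k /kk; lia.
have I1 : (n ^ v.+1 * v ^ (2 * k - v.+1) <= n ^ (2 * k))%N.
  have -> : (2 * k = v.+1 + (2 * k - v.+1))%N by lia.
  by rewrite expnD addKn leq_mul2l expn_mono ?orbT.
have I2 : (v ^ k <= 8 ^ k * k`!)%N.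
  apply: (@leq_trans ((2 * k) ^ k)); first by apply: expn_mono; lia.
  rewrite expnMn (_ : 8 = 2 * 4)%N // expnMn -mulnA leq_mul2l; apply/orP; right.
  exact: (pow_fact R).
have I3 : (v ^ v <= 16 ^ k * v`!)%N.
  apply: leq_trans (pow_fact R v) _; rewrite leq_mul2r; apply/orP; right.
  rewrite (_ : 16 = 4 ^ 2)%N // -expnM; apply: leq_pexp2l => //; lia.
have I4 : (2 ^ v <= 4 ^ k)%N.
  rewrite (_ : 4 = 2 ^ 2)%N // -expnM; apply: leq_pexp2l => //; lia.
rewrite -(@leq_pmul2r (v`! * k`!)); last by rewrite muln_gt0 !fact_gt0.
apply: (@leq_trans (n ^ v * (8 * v ^ 3) ^ k * n * 2 ^ v)).
  have -> : ('C(n, v) * 'C(8 * v ^ 3, k) * n * 2 ^ v * (v`! * k`!) =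
     ('C(n, v) * v`!) * ('C(8 * v ^ 3, k) * k`!) * n * 2 ^ v)%N by ring.
  by apply: leq_mul => //; apply: leq_mul => //; apply: leq_mul; apply: bin_fact_le.
have ek : (3 * k = 1 + (2 * k - v.+1) + k + v)%N by lia.
have E : ((8 * v ^ 3) ^ k = 8 ^ k * (v * v ^ (2 * k - v.+1) * v ^ k * v ^ v))%N.
  by rewrite expnMn -expnM ek !expnD expn1.
rewrite E.
have -> : (n ^ v * (8 ^ k * (v * v ^ (2 * k - v.+1) * v ^ k * v ^ v)) * n * 2 ^ v =
    (n ^ v.+1 * v ^ (2 * k - v.+1)) * v * v ^ k * v ^ v * 8 ^ k * 2 ^ v)%N.
  by rewrite expnS; ring.
apply: (@leq_trans (n ^ (2 * k) * v * (8 ^ k * k`!) * (16 ^ k * v`!) * 8 ^ k * 4 ^ k)).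
  by repeat apply: leq_mul => //.
rewrite (_ : 4096 = 8 * 16 * 8 * 4)%N // !expnMn.
by rewrite leq_eqVlt; apply/orP; left; apply/eqP; ring.
Qed.

Import Order.TTheory GRing.Theory Num.Theory.
Local Open Scope ring_scope.

Lemma per_v (R : realType) n v (q : R) : (1 <= v <= n)%N -> 0 <= q ->
  q <= 4096%:R^-1 / n%:R ^+ 2 ->
  'C(n, v)%:R * ('C(8 * v ^ 3, kk v)%:R * q ^+ kk v) <= v%:R / n%:R * 2^-1 ^+ v.
Proof.
move=> Hv q0 qc; have /andP[v1 vn] := Hv; set k := kk v.
have n0 : (0 < n)%N by apply: leq_trans vn.
pose D : R := (4096 ^ k * n ^ (2 * k))%:R.
have D0 : 0 < D by rewrite ltr0n muln_gt0 !expn_gt0 n0.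
have DE : (4096%:R^-1 / n%:R ^+ 2) ^+ k = D^-1.
  rewrite /D natrM !natrX exprM -exprMn -invfM -exprVn; congr (_ ^+ _).
apply: (@le_trans _ _ ('C(n, v)%:R * ('C(8 * v ^ 3, k)%:R * D^-1))).
  rewrite ler_wpM2l ?ler0n // ler_wpM2l ?ler0n // -DE.
  by apply: lerXn2r => //; rewrite nnegrE // (le_trans q0 qc).
rewrite mulrA -natrM exprVn -mulrA -invfM -natrX -natrM.
have E0 : 0 < (n * 2 ^ v)%:R :> R by rewrite ltr0n muln_gt0 expn_gt0 n0.
rewrite ler_pdivlMr // mulrAC ler_pdivrMr // -!natrM ler_nat.
have := core_ineq R Hv; rewrite -/k => H.
have -> : ('C(n, v) * 'C(8 * v ^ 3, k) * (n * 2 ^ v) = 'C(n, v) * 'C(8 * v ^ 3, k) * n * 2 ^ v)%N by ring.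
by have -> : (v * (4096 ^ k * n ^ (2 * k)) = v * n ^ (2 * k) * 4096 ^ k)%N by ring.
Qed.

Lemma sum_geo (R : realType) m :
  \sum_(v < m) v%:R * (2^-1 : R) ^+ v <= 2.
Proof.
suff H : \sum_(v < m) v%:R * (2^-1 : R) ^+ v + m.+1%:R * 2^-1 ^+ m * 2 = 2.
  rewrite -[X in _ <= X]H lerDl; apply: mulr_ge0 => //; apply: mulr_ge0 => //.
  by apply: exprn_ge0; rewrite invr_ge0.
elim: m => [|m IH]; first by rewrite big_ord0 add0r expr0 mulr1 mul1r.
rewrite big_ord_recr /= -[RHS]IH -addrA; congr (_ + _).
by rewrite exprS; field.
Qed.

Section Sup.
Variable R : comRingType.
Variable I : finType.
Variables (C A : {set I}) (p : R).
Hypothesis AC : A \subset C.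

Definition wt (J : {set I}) : R := p ^+ #|J| * (1 - p) ^+ (#|C| - #|J|)%N.

Lemma prod_const_pred (P : pred I) (x : R) : \prod_(i | P i) x = x ^+ #|P|.
Proof. by rewrite prodr_const. Qed.

Lemma sum_super : \sum_(J : {set I} | J \subset C) (if A \subset J then wt J else 0) = p ^+ #|A|.
Proof.
pose F i : R := if i \in C then p else 0.
pose G i : R := if i \in C then (if i \in A then 0 else 1 - p) else 1.
have H1 : \prod_i (F i + G i) = p ^+ #|A|.
  rewrite (bigID (fun i => i \in A)) /= [X in _ * X]big1 ?mulr1.
    rewrite -prod_const_pred; apply: eq_bigr => i Hi.
    by rewrite /F /G (subsetP AC i Hi) Hi addr0.
  move=> i /negbTE Hi; rewrite /F /G Hi; case: ifP => _; last by rewrite add0r.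
  by rewrite addrC subrK.
rewrite -H1 bigA_distr big_mkcond /=.
apply: eq_big => // J _.
have [JC | JC] := boolP (J \subset C); last first.
  have [i Hi HiC] : exists2 i, i \in J & i \notin C.
    by move/subsetPn: JC => [i ? ?]; exists i.
  by rewrite (bigD1 i) //= Hi /F (negbTE HiC) mul0r.
have [AJ | AJ] := boolP (A \subset J); last first.
  have [i Hi HiJ] : exists2 i, i \in A & i \notin J.
    by move/subsetPn: AJ => [i ? ?]; exists i.
  by rewrite (bigD1 i) //= (negbTE HiJ) /G (subsetP AC i Hi) Hi mul0r.
rewrite (bigID (fun i => i \in J)) /= /wt.
congr (_ * _).
  rewrite -prod_const_pred; apply: eq_bigr => i Hi.
  have HiJ : i \in J := Hi.
  by rewrite HiJ /F (subsetP JC i HiJ).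
rewrite (bigID (fun i => i \in C)) /= [X in _ * X]big1 ?mulr1; last first.
  by move=> i /andP[Hi /negbTE HC]; rewrite (negbTE Hi) /G HC.
rewrite (eq_bigr (fun _ => 1 - p)); last first.
  move=> i /andP[Hi HC]; rewrite (negbTE Hi) /G HC.
  by case: ifP => // HA; move: Hi; rewrite (subsetP AJ i HA).
rewrite prod_const_pred; congr (_ ^+ _).
transitivity #|C :\: J|; first by rewrite cardsD (setIidPr JC).
by apply: eq_card => i; rewrite !inE.
Qed.
End Sup.

Lemma partition_card (R : realType) n (H : nat -> R) :
  \sum_(V : {set 'I_n}) H #|V| = \sum_(v < n.+1) 'C(n, v)%:R * H v.
Proof.
rewrite (partition_big (fun V : {set 'I_n} => (inord #|V| : 'I_n.+1)) xpredT) //=.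
apply: eq_bigr => v _.
have cV (V : {set 'I_n}) : (#|V| < n.+1)%N.
  by rewrite ltnS; apply: leq_trans (max_card _) _; rewrite card_ord.
rewrite (eq_bigl (fun V : {set 'I_n} => #|V| == v)); last first.
  by move=> V /=; rewrite -val_eqE /= inordK.
transitivity (\sum_(V : {set 'I_n} | #|V| == v) H v).
  by apply: eq_bigr => V /eqP ->.
rewrite sumr_const mulr_natl; congr (_ *+ _).
have -> : 'C(n, v) = #|[set V : {set 'I_n} | #|V| == v]| by rewrite card_draws card_ord.
by apply: eq_card => V; rewrite inE.
Qed.

Lemma bad_bound (R : realType) n (p : R) : (0 < n)%N -> 0 <= p <= 1 ->
  p <= 4096%:R^-1 / (n%:R ^+ 2) ->
  \sum_(Rs : {set triple n} | Rs \subset candidates n)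
     (if good Rs then 0 else wt (candidates n) p Rs) <= 2 * n%:R^-1.
Proof.
move=> n0 /andP[p0 p1] pc; set C := candidates n.
have wt0 Rs : 0 <= wt C p Rs.
  by rewrite /wt mulr_ge0 // exprn_ge0 // subr_ge0.
pose Tk (V : {set 'I_n}) := [set T : {set triple n} | T \subset W V & #|T| == kk #|V|].
pose S (Rs : {set triple n}) : R := \sum_(V : {set 'I_n} | (0 < #|V|)%N)
    \sum_(T in Tk V) (if T \subset Rs then 1 else 0).
have S0 Rs : 0 <= S Rs.
  by apply: sumr_ge0 => V _; apply: sumr_ge0 => T _; case: ifP.
apply: (@le_trans _ _ (\sum_(Rs : {set triple n} | Rs \subset C) wt C p Rs * S Rs)).
  apply: ler_sum => Rs RC; case: ifP => Hg; first by apply: mulr_ge0.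
  have [V [T V0 [TW TK TR]]] := bad_witness RC (negbT Hg).
  rewrite -[X in X <= _]mulr1 ler_wpM2l //.
  rewrite /S (bigD1 V) /=; last by rewrite card_gt0.
  rewrite (bigD1 T) /=; last by rewrite inE TW TK eqxx.
  rewrite TR -addrA lerDl addr_ge0 //; first by apply: sumr_ge0 => T' _; case: ifP.
  by apply: sumr_ge0 => V' _; apply: sumr_ge0 => T' _; case: ifP.
have -> : \sum_(Rs : {set triple n} | Rs \subset C) wt C p Rs * S Rs =
   \sum_(Rs : {set triple n} | Rs \subset C) \sum_(V : {set 'I_n} | (0 < #|V|)%N)
      \sum_(T in Tk V) wt C p Rs * (if T \subset Rs then 1 else 0).
  by apply: eq_bigr => Rs _; rewrite /S mulr_sumr; apply: eq_bigr => V _; rewrite mulr_sumr.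
rewrite exchange_big /=.
under eq_bigr => V _ do rewrite exchange_big /=.
apply: (@le_trans _ _ (\sum_(V : {set 'I_n} | (0 < #|V|)%N) \sum_(T in Tk V) p ^+ kk #|V|)).
  apply: ler_sum => V _; apply: ler_sum => T; rewrite inE => /andP[TW /eqP TK].
  have TC : T \subset C by apply: (subset_trans TW); apply/subsetP => t; rewrite inE => /andP[].
  rewrite -TK -(sum_super p TC) le_eqVlt; apply/orP; left; apply/eqP.
  by apply: eq_bigr => Rs _; case: ifP; rewrite ?mulr1 ?mulr0.
pose Hv (v : nat) : R := if v == 0%N then 0 else 'C(8 * v ^ 3, kk v)%:R * p ^+ kk v.
apply: (@le_trans _ _ (\sum_(V : {set 'I_n}) Hv #|V|)).
  have Hv0 v : 0 <= Hv v.
    by rewrite /Hv; case: ifP => _ //; apply: mulr_ge0 => //; apply: exprn_ge0.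
  rewrite [X in _ <= X](bigID (fun V : {set 'I_n} => (0 < #|V|)%N)) /=.
  rewrite -[X in X <= _]addr0; apply: lerD; last by apply: sumr_ge0.
  apply: ler_sum => V V0.
  rewrite /Hv eqn0Ngt V0 /= sumr_const -[p ^+ _ *+ _]mulr_natl ler_wpM2r ?exprn_ge0 // ler_nat.
  rewrite cards_draws; apply: leq_bin2l; exact: card_W.
rewrite partition_card.
apply: (@le_trans _ _ (\sum_(v < n.+1) v%:R / n%:R * 2^-1 ^+ v)).
  apply: ler_sum => v _; rewrite /Hv; case: eqP => [-> | /eqP v0].
    by rewrite mulr0 mul0r mul0r.
  apply: per_v => //; apply/andP; split; first by lia.
  by have := ltn_ord v; lia.
under eq_bigr => v _ do rewrite mulrAC.
rewrite -mulr_suml ler_wpM2r ?invr_ge0 ?ler0n //.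
exact: sum_geo.
Qed.

From mathcomp Require Import boolp.
Lemma main_bound (R : realType) (n : nat) (p : R) : (0 < n)%N -> 0 <= p <= 1 ->
  p <= 4096%:R^-1 / (n%:R ^+ 2) ->
  1 - 2 * n%:R^-1 <= prob_free n p <= 1.
Proof.
move=> n0 p01 pc; have /andP[p0 p1] := p01; set C := candidates n.
have wt0 Rs : 0 <= wt C p Rs.
  by rewrite /wt mulr_ge0 // exprn_ge0 // subr_ge0.
have tot1 : \sum_(Rs : {set triple n} | Rs \subset C) wt C p Rs = 1.
  rewrite -(expr0 p) -(cards0 (triple n)) -(sum_super p (sub0set C)).
  by apply: eq_bigr => Rs _; rewrite sub0set.
have E : prob_free n p = \sum_(Rs : {set triple n} | Rs \subset C)
    (if `[< triangular_free Rs >] then wt C p Rs else 0) by [].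
rewrite E; apply/andP; split; last first.
  rewrite -tot1; apply: ler_sum => Rs _; case: ifP => // _.
apply: (@le_trans _ _ (\sum_(Rs : {set triple n} | Rs \subset C)
    (wt C p Rs - if good Rs then 0 else wt C p Rs))).
  rewrite sumrB tot1 lerD2l lerN2; exact: bad_bound.
apply: ler_sum => Rs _; case: ifP => Hg.
  by rewrite subr0 asboolT //; apply: good_free.
by rewrite subrr; case: ifP.
Qed.

From mathcomp Require Import boolp classical_sets reals topology normedtype sequences.
Import Order.TTheory GRing.Theory Num.Theory numFieldNormedType.Exports.
Local Open Scope ring_scope. Local Open Scope classical_set_scope.
Unset Implicit Arguments.

Theorem theorem1p1 (R : realType) :
  exists c : R, 0 < c /\
    forall p : nat -> R,
      (forall n : nat, 0 <= p n <= 1) ->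
      (forall n : nat, (0 < n)%N -> p n <= c / (n%:R ^+ 2)) ->
      (fun n : nat => prob_free n (p n)) @ \oo --> (1 : R).
Proof.
exists (4096%:R)^-1; split; first by rewrite invr_gt0 ltr0n.
move=> p p01 pc.
apply: (@squeeze_cvgr _ _ _ _ (fun n => 1 - 4 * (n.+1)%:R^-1) (fun _ => 1)).
- near=> n.
  have n0 : (0 < n)%N by near: n; exact: nbhs_infty_ge.
  have h := @main_bound R n (p n) n0 (p01 n) (pc n n0).
  case/andP: h => h1 h2; rewrite h2 andbT; apply: le_trans h1.
  rewrite lerD2l lerN2.
  have nR : 0 < n%:R :> R by rewrite ltr0n.
  rewrite -(ler_pM2r nR) -(ler_pM2r (ltr0Sn R n)).
  rewrite divfK ?gt_eqF // -mulrA [n%:R * _]mulrC mulrA divfK ?gt_eqF ?ltr0Sn // -!natrM ler_nat; lia.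
  
- have H : (fun n => 1 - 4 * @harmonic R n) @ \oo --> (1 - 4 * 0 : R).
    by apply: cvgB; [exact: cvg_cst | apply: cvgMr; exact: cvg_harmonic].
  by rewrite mulr0 subr0 in H.
- exact: cvg_cst.
Unshelve. all: by end_near.
Qed.
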